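(* Fix one of the two variants $\sharp\in\{\text{lumped},\text{exact}\}$ described in the context. Let $\vec X^m\in\underline V^h_{\partial_0}$ satisfy assumption $(\mathfrak A)$, let $\Delta t_m>0$, and let $(\delta\vec X^{m+1},\kappa^{m+1})\in\underline V^h_\partial\times W_\sharp$ satisfy, with $\vec X^{m+1}=\vec X^m+\delta\vec X^{m+1}$, $$\Big(\vec X^m\cdot\vec e_1\,\tfrac{\vec X^{m+1}-\vec X^m}{\Delta t_m},\chi\,\vec\nu^m|\vec X^m_\rho|\Big)_\sharp=\Big(\vec X^m\cdot\vec e_1\,\kappa^{m+1},\chi|\vec X^m_\rho|\Big)_\sharp-\frac{(\vec X^m\cdot\vec e_1,\kappa^{m+1}|\vec X^m_\rho|)_\sharp}{(\vec X^m\cdot\vec e_1,|\vec X^m_\rho|)}\,\big(\vec X^m\cdot\vec e_1,\chi|\vec X^m_\rho|\big)_\sharp\quad\forall\chi\in W_\sharp,$$ $$\Big(\vec X^m\cdot\vec e_1\,\kappa^{m+1}\vec\nu^m,\vec\eta\,|\vec X^m_\rho|\Big)_\sharp+\big(\vec\eta\cdot\vec e_1,|\vec X^{m+1}_\rho|\big)+\Big((\vec X^m\cdot\vec e_1)\vec X^{m+1}_\rho,\vec\eta_\rho|\vec X^m_\rho|^{-1}\Big)=B^m(\vec\eta)\quad\forall\vec\eta\in\underline V^h_\partial.$$ Then $$\tfrac1{2\pi}\big(E(\vec X^m)-E(\vec X^{m+1})\big)\ge\Delta t_m\Big[\big(\vec X^m\cdot\vec e_1\,|\kappa^{m+1}|^2,|\vec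 X^m_\rho|\big)_\sharp-\frac{\big|(\vec X^m\cdot\vec e_1,\kappa^{m+1}|\vec X^m_\rho|)_\sharp\big|^2}{(\vec X^m\cdot\vec e_1,|\vec X^m_\rho|)}\Big]\ge0 .$$
   Context: Setup. $\vec e_1=(1,0)^T$, $\vec e_2=(0,1)^T$; ''$\cdot$'' is the Euclidean inner product; $[r]_+=\max\{r,0\}$, $[r]_-=-\max\{-r,0\}$. $I$ is either the periodic interval $\mathbb R/\mathbb Z$ (with $\partial I=\emptyset$) or $I=(0,1)$ (with $\partial I=\{0,1\}$). $\partial I=\partial_DI\cup\partial_0I\cup\partial_1I\cup\partial_2I$ is a given disjoint partition, and $\widehat\varrho^{(p)}\in\mathbb R$, $p\in\{0,1\}$, are given constants with $|\widehat\varrho^{(p)}|\le1$. Let $J\ge3$, $h=1/J$, $q_j=jh$ ($j=0,\dots,J$; $q_0=q_J$ identified in the periodic case). $V^h$ is the space of continuous functions on $\overline I$ (periodic if $I=\mathbb R/\mathbb Z$) that are affine on each $[q_{j-1},q_j]$; $\underline V^h=[V^h]^2$; $\underline V^h_{\partial_0}=\{\vec\eta\in\underline V^h:\vec\eta(\rho)\cdot\vec e_1=0\ \forall\rho\in\partial_0I\}$; $\underline V^h_\partial=\{\vec\eta\in\underline V^h_{\partial_0}:\vec\eta(\rho)\cdot\vec e_i=0\ \forall\rho\in\partial_iI,\ i=1,2;\ \vec\eta(\rho)=\vec0\ \forall\rho\in\partial_DI\}$; $W^h_{\partial_0}=\{\chi\in V^h:\chi(\rho)=0\ \forall\rho\in\partial_0I\}$.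 $(\cdot,\cdot)$ is the $L^2(I)$ inner product, and for piecewise continuous $f,g$ the mass-lumped product is $(f,g)^h=\tfrac h2\sum_{j=1}^J[(fg)(q_j^-)+(fg)(q_{j-1}^+)]$. Two variants: ''lumped'': $(\cdot,\cdot)_\sharp=(\cdot,\cdot)^h$, $W_\sharp=W^h_{\partial_0}$; ''exact'': $(\cdot,\cdot)_\sharp=(\cdot,\cdot)$, $W_\sharp=V^h$. $\vec\nu^m=-[\vec X^m_\rho]^\perp/|\vec X^m_\rho|$ with $(a,b)^\perp=(b,-a)$. Assumption $(\mathfrak A)$: $|\vec X^m_\rho|>0$ a.e. on $I$ and $\vec X^m(\rho)\cdot\vec e_1>0$ for all $\rho\in\overline I\setminus\partial_0I$. $B^m(\vec\eta)=-\sum_{p\in\partial_1I}\widehat\varrho^{(p)}(\vec X^m(p)\cdot\vec e_1)\vec\eta(p)\cdot\vec e_2-\sum_{p\in\partial_2I}\big(([\widehat\varrho^{(p)}]_+\vec X^{m+1}(p)+[\widehat\varrho^{(p)}]_-\vec X^m(p))\cdot\vec e_1\big)\vec\eta(p)\cdot\vec e_1$. The discrete energy of $\vec X\in\underline V^h$ is $E(\vec X)=2\pi(\vec X\cdot\vec e_1,|\vec X_\rho|)+2\pi\sum_{p\in\partial_1I}\widehat\varrho^{(p)}(\vec X(p)\cdot\vec e_1)(\vec X(p)\cdot\vec e_2)+\pi\sum_{p\in\partial_2I}\widehat\varrho^{(p)}(\vec X(p)\cdot\vec e_1)^2$. *)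

(* Defs.v *)
From Stdlib Require Import Reals ClassicalEpsilon.
Open Scope R_scope.

Definition vec := (R * R)%type.
Definition dot (u v : vec) : R := fst u * fst v + snd u * snd v.
Definition vadd (u v : vec) : vec := (fst u + fst v, snd u + snd v).
Definition vsub (u v : vec) : vec := (fst u - fst v, snd u - snd v).
Definition vscal (a : R) (u : vec) : vec := (a * fst u, a * snd u).
Definition vnorm (u : vec) : R := sqrt (fst u ^ 2 + snd u ^ 2).
Definition perp (u : vec) : vec := (snd u, - fst u).

Definition posp (r : R) : R := Rmax r 0.
Definition negp (r : R) : R := - Rmax (- r) 0.

Fixpoint sumR (n : nat) (g : nat -> R) : R :=
  match n with O => 0 | S k => sumR k g + g (S k) end.

(* ---------- Riemann integral (value; 0 if not integrable) ---------- *)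
Definition Rint (f : R -> R) (a b : R) : R :=
  epsilon (inhabits 0) (fun r => exists pr : Riemann_integrable f a b, RiemannInt pr = r).

Definition q (J i : nat) : R := INR i / INR J.
Definition hh (J : nat) : R := / INR J.

(* A function of V^h is represented by its nodal values f 0, ..., f J
   (in the periodic case f J = f 0).  On element j = [q_{j-1}, q_j]
   (1 <= j <= J) it is the affine interpolant. *)
Definition elem (J : nat) (f : nat -> R) (j : nat) (x : R) : R :=
  f (j - 1)%nat + (f j - f (j - 1)%nat) * (x - q J (j - 1)) * INR J.
Definition delem (J : nat) (f : nat -> R) (j : nat) : R :=
  (f j - f (j - 1)%nat) * INR J.

Definition elem2 (J : nat) (X : nat -> vec) (j : nat) (x : R) : vec :=
  (elem J (fun i => fst (X i)) j x, elem J (fun i => snd (X i)) j x).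
Definition dX (J : nat) (X : nat -> vec) (j : nat) : vec :=
  (delem J (fun i => fst (X i)) j, delem J (fun i => snd (X i)) j).

Definition nu (J : nat) (X : nat -> vec) (j : nat) : vec :=
  vscal (- / vnorm (dX J X j)) (perp (dX J X j)).

(* ---------- inner products of piecewise continuous functions ----------
   A piecewise continuous function is given elementwise: F j is its
   (continuous extension) on the closed element [q_{j-1}, q_j].  The
   arguments below are the pointwise products (f g) resp. (u . v). *)
Definition ipE (J : nat) (F : nat -> R -> R) : R :=
  sumR J (fun j => Rint (F j) (q J (j - 1)) (q J j)).
(* mass lumping: h/2 sum_j [ (fg)(q_j^-) + (fg)(q_{j-1}^+) ] *)
Definition ipL (J : nat) (F : nat -> R -> R) : R :=
  hh J / 2 * sumR J (fun j => F j (q J j) + F j (q J (j - 1))).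

Inductive variant := Lumped | Exact.
Definition ipS (v : variant) (J : nat) (F : nat -> R -> R) : R :=
  match v with Lumped => ipL J F | Exact => ipE J F end.

(* ---------- domain and boundary ----------
   per = true : I = R/Z (no boundary); per = false : I = (0,1), boundary {0,1}.
   Boundary point p : bool  (false = 0, true = 1); bc p is the part of the
   partition dI = d_D I u d_0 I u d_1 I u d_2 I that contains p. *)
Inductive bclabel := BD | B0 | B1 | B2.
Definition bclabel_eqb (a b : bclabel) : bool :=
  match a, b with
  | BD, BD | B0, B0 | B1, B1 | B2, B2 => true
  | _, _ => false
  end.

Definition bpt (p : bool) : R := if p then 1 else 0.
Definition bnode (J : nat) (p : bool) : nat := if p then J else 0%nat.

Definition inB (per : bool) (bc : bool -> bclabel) (k : bclabel) (p : bool) : Prop :=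
  per = false /\ bc p = k.
Definition inBpt (per : bool) (bc : bool -> bclabel) (k : bclabel) (x : R) : Prop :=
  exists p, inB per bc k p /\ x = bpt p.

Definition bsum (per : bool) (bc : bool -> bclabel) (k : bclabel) (g : bool -> R) : R :=
  if per then 0 else
    (if bclabel_eqb (bc false) k then g false else 0)
    + (if bclabel_eqb (bc true) k then g true else 0).

Definition inVh (per : bool) (J : nat) (f : nat -> R) : Prop :=
  per = true -> f J = f 0%nat.
Definition inVh2 (per : bool) (J : nat) (X : nat -> vec) : Prop :=
  per = true -> X J = X 0%nat.
Definition inV0 (per : bool) (bc : bool -> bclabel) (J : nat) (X : nat -> vec) : Prop :=
  inVh2 per J X /\ (forall p, inB per bc B0 p -> fst (X (bnode J p)) = 0).
Definition inVd (per : bool) (bc : bool -> bclabel) (J : nat) (X : nat -> vec) : Prop :=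
  inV0 per bc J X
  /\ (forall p, inB per bc B1 p -> fst (X (bnode J p)) = 0)
  /\ (forall p, inB per bc B2 p -> snd (X (bnode J p)) = 0)
  /\ (forall p, inB per bc BD p -> X (bnode J p) = (0, 0)).
Definition inW0 (per : bool) (bc : bool -> bclabel) (J : nat) (f : nat -> R) : Prop :=
  inVh per J f /\ (forall p, inB per bc B0 p -> f (bnode J p) = 0).
Definition inWS (v : variant) (per : bool) (bc : bool -> bclabel) (J : nat) (f : nat -> R) : Prop :=
  match v with Lumped => inW0 per bc J f | Exact => inVh per J f end.

Definition assumptionA (per : bool) (bc : bool -> bclabel) (J : nat) (X : nat -> vec) : Prop :=
  (forall j : nat, (1 <= j <= J)%nat -> vnorm (dX J X j) > 0)
  /\ (forall (j : nat) (x : R), (1 <= j <= J)%nat -> q J (j - 1) <= x <= q J j ->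
        ~ inBpt per bc B0 x -> fst (elem2 J X j x) > 0).

Definition energy (per : bool) (bc : bool -> bclabel) (rh : bool -> R) (J : nat)
    (X : nat -> vec) : R :=
  2 * PI * ipE J (fun j x => fst (elem2 J X j x) * vnorm (dX J X j))
  + 2 * PI * bsum per bc B1 (fun p => rh p * fst (X (bnode J p)) * snd (X (bnode J p)))
  + PI * bsum per bc B2 (fun p => rh p * fst (X (bnode J p)) ^ 2).

Definition Bm (per : bool) (bc : bool -> bclabel) (rh : bool -> R) (J : nat)
    (Xm Xm1 eta : nat -> vec) : R :=
  - bsum per bc B1 (fun p => rh p * fst (Xm (bnode J p)) * snd (eta (bnode J p)))
  - bsum per bc B2 (fun p =>
      (posp (rh p) * fst (Xm1 (bnode J p)) + negp (rh p) * fst (Xm (bnode J p)))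
      * fst (eta (bnode J p))).

(* Main.v *)
Require Import Defs.
From Stdlib Require Import Reals Lra Lia Psatz ClassicalEpsilon FunctionalExtensionality Classical.
From Coquelicot Require Import Coquelicot.
Open Scope R_scope.

Definition Cf (F : nat -> R -> R) := forall j x, ex_derive (F j) x.

Lemma Cf_int (F : nat -> R -> R) j a b : Cf F -> Riemann_integrable (F j) a b.
Proof.
  intro H.
  assert (C : forall x, continuity_pt (F j) x).
  { intro x. apply continuity_pt_filterlim. exact (ex_derive_continuous (F j) x (H j x)). }
  destruct (Rle_dec a b).
  - apply continuity_implies_RiemannInt; auto.
  - apply RiemannInt_P1, continuity_implies_RiemannInt; auto. lra.
Qed.

Lemma Rint_eq f a b (pr : Riemann_integrable f a b) : Rint f a b = RiemannInt pr.
Proof.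
  unfold Rint.
  destruct (epsilon_spec (inhabits 0) (fun r => exists pr, RiemannInt pr = r)
     (ex_intro _ _ (ex_intro _ pr eq_refl))) as [pr' E].
  rewrite <- E. apply RiemannInt_P5.
Qed.


Lemma Rint_lin2 (F G : nat -> R -> R) j a b l : Cf F -> Cf G ->
  Rint (fun x => F j x + l * G j x) a b = Rint (F j) a b + l * Rint (G j) a b.
Proof.
  intros HF HG.
  pose proof (Cf_int F j a b HF) as p1. pose proof (Cf_int G j a b HG) as p2.
  rewrite (Rint_eq _ _ _ (RiemannInt_P10 l p1 p2)), (Rint_eq _ _ _ p1), (Rint_eq _ _ _ p2).
  apply RiemannInt_P13.
Qed.

Lemma Rint_pos (F : nat -> R -> R) j a b : Cf F -> a <= b ->
  (forall x, a <= x <= b -> 0 <= F j x) -> 0 <= Rint (F j) a b.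
Proof.
  intros HF hab H.
  pose proof (Cf_int F j a b HF) as p1.
  rewrite (Rint_eq _ _ _ p1).
  pose proof (RiemannInt_P15 (RiemannInt_P14 a b 0)) as E.
  replace 0 with (0 * (b - a)) by ring. rewrite <- E.
  apply RiemannInt_P19; auto. intros x Hx. unfold fct_cte. apply H; lra.
Qed.

Lemma sumR_lin n (f g : nat -> R) l : sumR n (fun j => f j + l * g j) = sumR n f + l * sumR n g.
Proof. induction n; simpl; [ring|rewrite IHn; ring]. Qed.

Lemma sumR_pos n (f : nat -> R) : (forall j, (1 <= j <= n)%nat -> 0 <= f j) -> 0 <= sumR n f.
Proof.
  induction n; simpl; intros H; [lra|].
  assert (0 <= sumR n f) by (apply IHn; intros; apply H; lia).
  assert (0 <= f (S n)) by (apply H; lia). lra.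
Qed.

Lemma sumR_ext n (f g : nat -> R) : (forall j, (1 <= j <= n)%nat -> f j = g j) -> sumR n f = sumR n g.
Proof.
  induction n; simpl; intros H; auto. rewrite IHn, (H (S n)); auto; try lia; intros; apply H; lia.
Qed.

Lemma ipS_lin v J (F G H : nat -> R -> R) l : Cf F -> Cf G ->
  (forall j x, H j x = F j x + l * G j x) -> ipS v J H = ipS v J F + l * ipS v J G.
Proof.
  intros HF HG HH.
  replace H with (fun j x => F j x + l * G j x)
    by (apply functional_extensionality; intro j; apply functional_extensionality; intro x; auto).
  destruct v; simpl.
  - unfold ipL. rewrite <- Rmult_assoc, (Rmult_comm l), Rmult_assoc, <- Rmult_plus_distr_l.
    f_equal. rewrite <- sumR_lin. apply sumR_ext. intros. ring.
  - unfold ipE. rewrite <- sumR_lin. apply sumR_ext. intros. apply Rint_lin2; auto.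
Qed.

Lemma ipS_ext v J (F G : nat -> R -> R) : (forall j x, F j x = G j x) -> ipS v J F = ipS v J G.
Proof.
  intros H. replace F with G; auto.
  apply functional_extensionality; intro j; apply functional_extensionality; intro x; auto.
Qed.

Lemma q_le J j : (0 < J)%nat -> (1 <= j)%nat -> q J (j - 1) <= q J j.
Proof.
  intros HJ Hj. unfold q. apply Rmult_le_compat_r.
  - apply Rlt_le, Rinv_0_lt_compat, lt_0_INR; lia.
  - apply le_INR; lia.
Qed.

Lemma ipS_pos v J (H : nat -> R -> R) : (0 < J)%nat -> Cf H ->
  (forall j, (1 <= j <= J)%nat -> forall x, q J (j - 1) <= x <= q J j -> 0 <= H j x) ->
  0 <= ipS v J H.
Proof.
  intros HJ HC HH. destruct v; simpl.
  - unfold ipL. apply Rmult_le_pos.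
    + unfold hh. apply Rmult_le_pos; [apply Rlt_le, Rinv_0_lt_compat, lt_0_INR; lia | lra].
    + apply sumR_pos. intros j Hj. pose proof (q_le J j HJ ltac:(lia)).
      apply Rplus_le_le_0_compat; apply HH; auto; lra.
  - unfold ipE. apply sumR_pos. intros j Hj. apply Rint_pos; auto.
    apply q_le; lia.
Qed.

Lemma INRJ_pos J : (0 < J)%nat -> 0 < INR J.
Proof. intro; apply lt_0_INR; lia. Qed.

Lemma q_diff J j : (0 < J)%nat -> (1 <= j)%nat -> q J j - q J (j - 1) = / INR J.
Proof.
  intros HJ Hj. pose proof (INRJ_pos J HJ). unfold q.
  destruct j; [lia|]. replace (S j - 1)%nat with j by lia. rewrite S_INR. field. lra.
Qed.

Lemma elem_start J f j : elem J f j (q J (j - 1)) = f (j - 1)%nat.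
Proof. unfold elem. ring. Qed.

Lemma elem_end J f j : (0 < J)%nat -> (1 <= j)%nat -> elem J f j (q J j) = f j.
Proof.
  intros HJ Hj. pose proof (INRJ_pos J HJ). unfold elem.
  replace (q J j - q J (j - 1)) with (/ INR J) by (symmetry; apply q_diff; auto).
  field. lra.
Qed.

Lemma q0 J k : (0 < J)%nat -> q J k = 0 -> k = 0%nat.
Proof.
  intros HJ H. pose proof (INRJ_pos J HJ). unfold q in H.
  apply INR_eq. simpl. apply (Rmult_eq_reg_r (/ INR J)).
  - unfold Rdiv in H. rewrite H. ring.
  - apply Rgt_not_eq, Rinv_0_lt_compat; lra.
Qed.

Lemma q1 J k : (0 < J)%nat -> q J k = 1 -> k = J.
Proof.
  intros HJ H. pose proof (INRJ_pos J HJ). unfold q in H.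
  apply INR_eq. apply (Rmult_eq_reg_r (/ INR J)).
  - unfold Rdiv in H. rewrite H. field. lra.
  - apply Rgt_not_eq, Rinv_0_lt_compat; lra.
Qed.

Lemma x1_nonneg per bc J Xm : (0 < J)%nat -> inV0 per bc J Xm -> assumptionA per bc J Xm ->
  forall j, (1 <= j <= J)%nat -> forall x, q J (j - 1) <= x <= q J j ->
  0 <= elem J (fun i => fst (Xm i)) j x.
Proof.
  intros HJ [_ HV] [_ HA] j Hj x Hx.
  pose proof (INRJ_pos J HJ).
  set (f := fun i => fst (Xm i)).
  assert (N1 : 0 <= f (j - 1)%nat).
  { destruct (classic (inBpt per bc B0 (q J (j - 1)))) as [Hb|Hb].
    - destruct Hb as [p [Hp Eq]]. destruct p; simpl in Eq.
      + apply q1 in Eq; auto. lia.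
      + apply q0 in Eq; auto. rewrite Eq. unfold f. pose proof (HV false Hp) as Z. simpl in Z. lra.
    - pose proof (HA j (q J (j - 1)) Hj ltac:(pose proof (q_le J j HJ ltac:(lia)); lra) Hb) as G.
      simpl in G. rewrite elem_start in G. unfold f. lra. }
  assert (N2 : 0 <= f j).
  { destruct (classic (inBpt per bc B0 (q J j))) as [Hb|Hb].
    - destruct Hb as [p [Hp Eq]]. destruct p; simpl in Eq.
      + apply q1 in Eq; auto. subst j. unfold f. pose proof (HV true Hp) as Z. simpl in Z. lra.
      + apply q0 in Eq; auto. lia.
    - pose proof (HA j (q J j) Hj ltac:(pose proof (q_le J j HJ ltac:(lia)); lra) Hb) as G.
      simpl in G. rewrite elem_end in G; try lia. unfold f. lra. }
  pose proof (q_diff J j HJ ltac:(lia)) as Dq.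
  set (s := (x - q J (j - 1)) * INR J).
  assert (0 <= s <= 1).
  { unfold s. split.
    - apply Rmult_le_pos; lra.
    - replace 1 with ((q J j - q J (j - 1)) * INR J) by (rewrite Dq; field; lra).
      apply Rmult_le_compat_r; lra. }
  unfold elem. fold f.
  replace (f (j - 1)%nat + (f j - f (j - 1)%nat) * (x - q J (j - 1)) * INR J)
    with (f (j - 1)%nat * (1 - s) + f j * s) by (unfold s; ring).
  nra.
Qed.

Lemma trap_RInt a s f0 f1 c : 0 < s ->
  RInt (fun x => (f0 + (f1 - f0) * (x - a) * s) * c) a (a + / s)
  = / s / 2 * ((f0 + (f1 - f0) * (a + / s - a) * s) * c + (f0 + (f1 - f0) * (a - a) * s) * c).
Proof.
  intros Hs. apply is_RInt_unique.
  set (G := fun x => c * (f0 * x + (f1 - f0) * s * (x - a) ^ 2 / 2)).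
  replace (/ s / 2 * ((f0 + (f1 - f0) * (a + / s - a) * s) * c + (f0 + (f1 - f0) * (a - a) * s) * c))
    with (minus (G (a + / s)) (G a)).
  - apply (is_RInt_derive (V:=R_CompleteNormedModule) G).
    + intros x _. unfold G. auto_derive; auto. field.
    + intros x _. apply (ex_derive_continuous (fun x => (f0 + (f1 - f0) * (x - a) * s) * c)).
      auto_derive. auto.
  - unfold minus, plus, opp. simpl. unfold G. field. lra.
Qed.

Lemma trap J (f c : nat -> R) : (0 < J)%nat ->
  ipL J (fun j x => elem J f j x * c j) = ipE J (fun j x => elem J f j x * c j).
Proof.
  intros HJ. pose proof (INRJ_pos J HJ).
  unfold ipL, ipE. unfold Rdiv. rewrite Rmult_assoc.
  assert (E : forall n, (n <= J)%nat -> hh J * / 2 * sumR n (fun j => elem J f j (q J j) * c j + elem J f j (q J (j - 1)) * c j) = sumR n (fun j => Rint (fun x => elem J f j x * c j) (q J (j - 1)) (q J j))).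
  { induction n; intros Hn; simpl; [ring|].
    rewrite <- IHn by lia. rewrite Rmult_plus_distr_l. f_equal.
    replace (n - 0)%nat with n by lia.
    assert (Hi : Riemann_integrable (fun x => elem J f (S n) x * c (S n)) (q J n) (q J (S n))).
    { apply (Cf_int (fun j x => elem J f j x * c j)). intros j x. unfold elem. auto_derive. auto. }
    rewrite (Rint_eq _ _ _ Hi), <- RInt_Reals.
    assert (Qd : q J (S n) = q J n + / INR J).
    { pose proof (q_diff J (S n) HJ ltac:(lia)) as D. replace (S n - 1)%nat with n in D by lia. lra. }
    rewrite Qd. replace (elem J f (S n)) with (elem J f (S n)) by auto.
    unfold elem. replace (S n - 1)%nat with n by lia. rewrite trap_RInt by auto. unfold hh. unfold Rdiv. reflexivity. }
  rewrite <- E; auto. ring.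
Qed.

Lemma ipS_zero v J : ipS v J (fun _ _ => 0) = 0.
Proof.
  assert (C : Cf (fun _ _ => 0)) by (intros j x; auto_derive; auto).
  pose proof (ipS_lin v J _ _ (fun _ _ => 0) 1 C C ltac:(intros; cbv beta; ring)). lra.
Qed.

Lemma ipS_scal v J (G H : nat -> R -> R) l : Cf G ->
  (forall j x, H j x = l * G j x) -> ipS v J H = l * ipS v J G.
Proof.
  intros HG HH.
  assert (C : Cf (fun _ _ => 0)) by (intros j x; auto_derive; auto).
  rewrite (ipS_lin v J (fun _ _ => 0) G H l C HG) by (intros; rewrite HH; cbv beta; ring).
  rewrite ipS_zero. ring.
Qed.

Lemma ipS_lin3 v J (F1 F2 F3 H : nat -> R -> R) a b : Cf F1 -> Cf F2 -> Cf F3 ->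
  (forall j x, H j x = F1 j x + a * F2 j x + b * F3 j x) ->
  ipS v J H = ipS v J F1 + a * ipS v J F2 + b * ipS v J F3.
Proof.
  intros C1 C2 C3 HH.
  assert (C12 : Cf (fun j x => F1 j x + a * F2 j x)).
  { intros j x. apply (ex_derive_plus (F1 j) (fun x => a * F2 j x)); auto.
    apply ex_derive_scal; auto. }
  rewrite (ipS_lin v J _ F3 H b C12 C3) by (intros; rewrite HH; cbv beta; ring).
  rewrite (ipS_lin v J F1 F2 _ a C1 C2) by (intros; cbv beta; ring). ring.
Qed.

Lemma vec_ineq (a b d : vec) : fst a = fst b + fst d -> snd a = snd b + snd d -> 0 < vnorm b ->
  0 <= dot a d * / vnorm b - vnorm a + vnorm b.
Proof.
  destruct a as [a1 a2], b as [b1 b2], d as [d1 d2]. unfold vnorm, dot; cbn [fst snd].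
  intros E1 E2 Hb.
  assert (d1 = a1 - b1) by lra. assert (d2 = a2 - b2) by lra. subst d1 d2.
  set (na := sqrt (a1 ^ 2 + a2 ^ 2)) in *. set (nb := sqrt (b1 ^ 2 + b2 ^ 2)) in *.
  assert (Ha : 0 <= na) by apply sqrt_pos.
  assert (Ea : na * na = a1 ^ 2 + a2 ^ 2) by (apply sqrt_sqrt; nra).
  assert (Eb : nb * nb = b1 ^ 2 + b2 ^ 2) by (apply sqrt_sqrt; nra).
  assert (CS : a1 * b1 + a2 * b2 <= na * nb).
  { assert ((a1 * b1 + a2 * b2) ^ 2 <= (na * nb) ^ 2).
    { replace ((na * nb) ^ 2) with ((na * na) * (nb * nb)) by ring. rewrite Ea, Eb.
      pose proof (pow2_ge_0 (a1 * b2 - a2 * b1)). nra. }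
    assert (0 <= na * nb) by (apply Rmult_le_pos; lra).
    set (X := a1 * b1 + a2 * b2) in *. set (Y := na * nb) in *.
    destruct (Rle_dec X Y) as [r|r]; auto. assert (Y < X) by lra.
    assert (Y * Y < X * X) by (apply Rmult_le_0_lt_compat; lra). simpl in *. lra. }
  assert (Key : 0 <= (a1 * (a1 - b1) + a2 * (a2 - b2)) - na * nb + nb * nb).
  { replace (a1 * (a1 - b1) + a2 * (a2 - b2)) with (na * na - (a1 * b1 + a2 * b2))
      by (rewrite Ea; ring).
    pose proof (pow2_ge_0 (na - nb)). 
    replace ((na - nb) ^ 2) with (na * na - 2 * (na * nb) + nb * nb) in H by ring. lra. }
  apply (Rmult_le_reg_r nb); auto.
  rewrite Rmult_0_l.
  replace (((a1 * (a1 - b1) + a2 * (a2 - b2)) * / nb - na + nb) * nb)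
    with ((a1 * (a1 - b1) + a2 * (a2 - b2)) - na * nb + nb * nb) by (field; lra).
  lra.
Qed.

Lemma pt lab r x1 x2 d1 d2 : (lab = Defs.B1 -> d1 = 0) -> (lab = Defs.B2 -> d2 = 0) ->
  (if bclabel_eqb lab Defs.B1 then r*x1*x2 else 0) - (if bclabel_eqb lab Defs.B1 then r*(x1+d1)*(x2+d2) else 0)
  + ((if bclabel_eqb lab Defs.B2 then r*x1^2 else 0) - (if bclabel_eqb lab Defs.B2 then r*(x1+d1)^2 else 0))/2
  >= - (if bclabel_eqb lab Defs.B1 then r*x1*d2 else 0)
     - (if bclabel_eqb lab Defs.B2 then (posp r*(x1+d1) + negp r * x1)*d1 else 0).
Proof.
  intros H1 H2. destruct lab; cbn [bclabel_eqb]; try lra.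
  - rewrite (H1 eq_refl). nra.
  - unfold posp, negp.
    destruct (Rle_dec 0 r).
    + rewrite (Rmax_left r 0) by lra. rewrite (Rmax_right (-r) 0) by lra.
      pose proof (pow2_ge_0 d1). nra.
    + rewrite (Rmax_right r 0) by lra. rewrite (Rmax_left (-r) 0) by lra.
      pose proof (pow2_ge_0 d1). nra.
Qed.

Lemma bdry per bc rh J (Xm dXm : nat -> vec) : inVd per bc J dXm ->
  let Y := fun i => vadd (Xm i) (dXm i) in
  bsum per bc Defs.B1 (fun p => rh p * fst (Xm (bnode J p)) * snd (Xm (bnode J p)))
  - bsum per bc Defs.B1 (fun p => rh p * fst (Y (bnode J p)) * snd (Y (bnode J p)))
  + (bsum per bc Defs.B2 (fun p => rh p * fst (Xm (bnode J p)) ^ 2)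
     - bsum per bc Defs.B2 (fun p => rh p * fst (Y (bnode J p)) ^ 2)) / 2
  >= Bm per bc rh J Xm Y dXm.
Proof.
  intros [_ [H1 [H2 _]]] Y. unfold Bm, bsum, Y, vadd. destruct per.
  - lra.
  - cbn [fst snd].
    assert (P : forall p, bc p = Defs.B1 -> fst (dXm (bnode J p)) = 0) by (intros; apply H1; split; auto).
    assert (Q : forall p, bc p = Defs.B2 -> snd (dXm (bnode J p)) = 0) by (intros; apply H2; split; auto).
    pose proof (pt (bc false) (rh false) (fst (Xm (bnode J false))) (snd (Xm (bnode J false)))
       (fst (dXm (bnode J false))) (snd (dXm (bnode J false))) (P false) (Q false)).
    pose proof (pt (bc true) (rh true) (fst (Xm (bnode J true))) (snd (Xm (bnode J true)))
       (fst (dXm (bnode J true))) (snd (dXm (bnode J true))) (P true) (Q true)).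
    destruct (bclabel_eqb (bc false) Defs.B1), (bclabel_eqb (bc true) Defs.B1),
      (bclabel_eqb (bc false) Defs.B2), (bclabel_eqb (bc true) Defs.B2); lra.
Qed.

Ltac cfx := intros ? ?; cbv [dot vscal vsub vadd elem2 elem fst snd]; auto_derive; auto.

Theorem mainTheorem11
  (v : variant) (per : bool) (bc : bool -> bclabel) (rh : bool -> R) (J : nat)
  (Xm dXm : nat -> vec) (kappa : nat -> R) (dt : R) :
  (forall p, Rabs (rh p) <= 1) ->
  (3 <= J)%nat ->
  inV0 per bc J Xm ->
  assumptionA per bc J Xm ->
  dt > 0 ->
  inVd per bc J dXm ->
  inWS v per bc J kappa ->
  let Xm1 := fun i => vadd (Xm i) (dXm i) in
  (forall chi : nat -> R, inWS v per bc J chi ->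
     ipS v J (fun j x => fst (elem2 J Xm j x)
        * dot (vscal (/ dt) (vsub (elem2 J Xm1 j x) (elem2 J Xm j x)))
              (vscal (elem J chi j x * vnorm (dX J Xm j)) (nu J Xm j)))
     = ipS v J (fun j x => fst (elem2 J Xm j x) * elem J kappa j x
                           * (elem J chi j x * vnorm (dX J Xm j)))
       - ipS v J (fun j x => fst (elem2 J Xm j x) * (elem J kappa j x * vnorm (dX J Xm j)))
         / ipE J (fun j x => fst (elem2 J Xm j x) * vnorm (dX J Xm j))
         * ipS v J (fun j x => fst (elem2 J Xm j x) * (elem J chi j x * vnorm (dX J Xm j)))) ->
  (forall eta : nat -> vec, inVd per bc J eta ->
     ipS v J (fun j x => dot (vscal (fst (elem2 J Xm j x) * elem J kappa j x) (nu J Xm j))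
                             (vscal (vnorm (dX J Xm j)) (elem2 J eta j x)))
     + ipE J (fun j x => fst (elem2 J eta j x) * vnorm (dX J Xm1 j))
     + ipE J (fun j x => dot (vscal (fst (elem2 J Xm j x)) (dX J Xm1 j))
                             (vscal (/ vnorm (dX J Xm j)) (dX J eta j)))
     = Bm per bc rh J Xm Xm1 eta) ->
  let A := ipS v J (fun j x => fst (elem2 J Xm j x) * (Rabs (elem J kappa j x)) ^ 2
                                * vnorm (dX J Xm j)) in
  let K := ipS v J (fun j x => fst (elem2 J Xm j x) * (elem J kappa j x * vnorm (dX J Xm j))) in
  let D := ipE J (fun j x => fst (elem2 J Xm j x) * vnorm (dX J Xm j)) in
  / (2 * PI) * (energy per bc rh J Xm - energy per bc rh J Xm1) >= dt * (A - Rabs K ^ 2 / D)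
  /\ dt * (A - Rabs K ^ 2 / D) >= 0.
Proof.
  intros Hrh HJ3 HV0 HA Hdt HVd HWk Xm1 Eq1 Eq2 A K D.
  assert (HJ : (0 < J)%nat) by lia.
  pose proof (x1_nonneg per bc J Xm HJ HV0 HA) as X1.
  specialize (Eq1 kappa HWk). specialize (Eq2 dXm HVd). fold K D in Eq1.
  set (T1 := ipS v J (fun j x => dot (vscal (fst (elem2 J Xm j x) * elem J kappa j x) (nu J Xm j))
                             (vscal (vnorm (dX J Xm j)) (elem2 J dXm j x)))) in *.
  set (T2 := ipE J (fun j x => fst (elem2 J dXm j x) * vnorm (dX J Xm1 j))) in *.
  set (T3 := ipE J (fun j x => dot (vscal (fst (elem2 J Xm j x)) (dX J Xm1 j))
                             (vscal (/ vnorm (dX J Xm j)) (dX J dXm j)))) in *.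
  set (S1 := ipE J (fun j x => fst (elem2 J Xm1 j x) * vnorm (dX J Xm1 j))).
  set (A' := ipS v J (fun j x => fst (elem2 J Xm j x) * elem J kappa j x
                           * (elem J kappa j x * vnorm (dX J Xm j)))) in *.
  assert (EA : A = A').
  { unfold A, A'. apply ipS_ext. intros j x. rewrite <- Rsqr_pow2, <- Rsqr_abs. unfold Rsqr. ring. }
  assert (ET1 : T1 = dt * (A - K / D * K)).
  { rewrite EA, <- Eq1.
    rewrite (ipS_scal v J (fun j x => dot (vscal (fst (elem2 J Xm j x) * elem J kappa j x) (nu J Xm j))
                             (vscal (vnorm (dX J Xm j)) (elem2 J dXm j x))) _ (/ dt)).
    - fold T1. field. lra.
    - cfx.
    - intros j x. unfold Xm1. cbv [dot vscal vsub vadd elem2 elem fst snd]. ring. }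
  assert (ST : T2 + T3 >= S1 - D).
  { set (H := fun j x => fst (elem2 J Xm j x) * (dot (dX J Xm1 j) (dX J dXm j) * / vnorm (dX J Xm j)
                 - vnorm (dX J Xm1 j) + vnorm (dX J Xm j))).
    set (G := fun j x => fst (elem2 J dXm j x) * vnorm (dX J Xm1 j)
               + 1 * dot (vscal (fst (elem2 J Xm j x)) (dX J Xm1 j)) (vscal (/ vnorm (dX J Xm j)) (dX J dXm j))
               + (-1) * (fst (elem2 J Xm1 j x) * vnorm (dX J Xm1 j))).
    assert (EG : ipS Exact J G = T2 + 1 * T3 + (-1) * S1).
    { apply ipS_lin3; try cfx. intros j x. unfold G. reflexivity. }
    assert (EH : ipS Exact J H = ipS Exact J G + 1 * D).
    { apply ipS_lin; try (unfold G; cfx); try cfx.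
      intros j x. unfold G, H, Xm1. cbv [dot vscal vsub vadd elem2 elem fst snd]. ring. }
    assert (PH : 0 <= ipS Exact J H).
    { apply ipS_pos; auto; [unfold H; cfx|].
      intros j Hj x Hx. unfold H. apply Rmult_le_pos.
      - apply X1; auto.
      - apply vec_ineq.
        + unfold dX, delem, Xm1, vadd. cbn [fst snd]. ring.
        + unfold dX, delem, Xm1, vadd. cbn [fst snd]. ring.
        + destruct HA as [HA1 _]. apply HA1; auto. }
    change (ipS Exact J H) with (ipE J H) in EH, PH. change (ipS Exact J G) with (ipE J G) in EG, EH. lra. }
  assert (BD : / (2 * PI) * (energy per bc rh J Xm - energy per bc rh J Xm1)
               >= D - S1 + Bm per bc rh J Xm Xm1 dXm).
  { pose proof (bdry per bc rh J Xm dXm HVd) as B. cbv zeta in B. fold Xm1 in B.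
    unfold energy. fold D S1. pose proof PI_RGT_0.
    match goal with |- / (2*PI) * (2*PI*?d + 2*PI*?a + PI*?b - (2*PI*?s + 2*PI*?c + PI*?e)) >= _ =>
      replace (/(2*PI) * _) with (d - s + (a - c + (b - e)/2)) by (field; lra) end.
    lra. }
  assert (LD : ipS v J (fun j x => fst (elem2 J Xm j x) * vnorm (dX J Xm j)) = D).
  { unfold D. destruct v; [exact (trap J _ _ HJ) | reflexivity]. }
  assert (D0 : 0 <= D).
  { unfold D. change (ipE J ?F) with (ipS Exact J F). apply ipS_pos; auto; [cfx|].
    intros j Hj x Hx. apply Rmult_le_pos; [apply X1; auto | apply sqrt_pos]. }
  assert (CSq : forall t, 0 <= A' + (-2 * t) * K + t ^ 2 * D).
  { intro t. rewrite <- LD.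
    assert (E := ipS_lin3 v J
      (fun j x => fst (elem2 J Xm j x) * elem J kappa j x * (elem J kappa j x * vnorm (dX J Xm j)))
      (fun j x => fst (elem2 J Xm j x) * (elem J kappa j x * vnorm (dX J Xm j)))
      (fun j x => fst (elem2 J Xm j x) * vnorm (dX J Xm j))
      (fun j x => fst (elem2 J Xm j x) * (elem J kappa j x - t) ^ 2 * vnorm (dX J Xm j))
      (-2 * t) (t ^ 2) ltac:(cfx) ltac:(cfx) ltac:(cfx) ltac:(intros j x; cbv beta; ring)).
    fold A' K in E. rewrite <- E.
    apply ipS_pos; auto; [cfx|].
    intros j Hj x Hx. apply Rmult_le_pos; [apply Rmult_le_pos|apply sqrt_pos].
    + apply X1; auto.
    + apply pow2_ge_0. }
  assert (AK : 0 <= A' - K / D * K).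
  { destruct D0 as [Dp|Dz].
    - pose proof (CSq (K / D)) as C.
      replace (A' + -2 * (K / D) * K + (K / D) ^ 2 * D) with (A' - K / D * K) in C by (field; lra).
      exact C.
    - rewrite <- Dz in CSq |- *.
      destruct (Req_dec K 0) as [Kz|Kn].
      + rewrite Kz. pose proof (CSq 0). lra.
      + pose proof (CSq ((A' + 1) / (2 * K))) as C.
        replace (A' + -2 * ((A' + 1) / (2 * K)) * K + ((A' + 1) / (2 * K)) ^ 2 * 0) with (-1) in C
          by (field; auto). lra. }
  assert (RK : Rabs K ^ 2 / D = K / D * K).
  { rewrite <- Rsqr_pow2, <- Rsqr_abs. unfold Rsqr, Rdiv. ring. }
  rewrite RK. split.
  - rewrite <- ET1. lra.
  - rewrite EA. apply Rle_ge, Rmult_le_pos; lra.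
Qed.
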